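(* Under the standing setting below, let $C_0>0$. For an integer $K\ge1$ set $\alpha=K^{-1/6}$, $\gamma=\min\{K^{-2/3},1/L_f\}$, let $(x_0,y_0)$ satisfy $h(x_0,y_0)\le\alpha^2C_0$, take $\rho(x,y)=\|\nabla h(x,y)\|\,h(x_0,y_0)^{1/2}$, and run the Algorithm. Then there is a constant $c>0$ depending only on $L_f,L_h,C_f,C_0,\bar f$ and an upper bound on $f(x_0,y_0)$ (not on $K$) such that $$\frac1K\sum_{k=0}^{K-1}\big(\|\Delta_k^x\|^2+\|\Delta_k^y\|^2\big)\le cK^{-1/3},\qquad\frac1K\sum_{k=0}^{K-1}h_k\le cK^{-1/3}.$$ Consequently, for every $\epsilon>0$ there is $K=\mathcal{O}(\epsilon^{-3})$ such that some $t\in\{0,\dots,K-1\}$ satisfies $\max\{\|\nabla_y g(x_t,y_t)\|^2,\|\nabla f_t+\lambda_t\nabla h_t\|^2\}\le\epsilon$, i.e. $(x_t,y_t,\lambda_t)$ is an $\epsilon$-KKT point of $\min_{(x,y)}f(x,y)$ s.t. $h(x,y)=0$.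
   Context: Standing setting. $f,g:\mathbb{R}^n\times\mathbb{R}^m\to\mathbb{R}$. $f$ is continuously differentiable, $\bar f:=\inf f>-\infty$, $\nabla f$ is $L_f$-Lipschitz, and $\|\nabla f\|\le C_f$ everywhere. $g$ is twice continuously differentiable, and $h(x,y):=\|\nabla_y g(x,y)\|^2$ is continuously differentiable with $\nabla h$ being $L_h$-Lipschitz ($L_h>0$). Write $\nabla h=(\nabla_x h,\nabla_y h)$, $f_k=f(x_k,y_k)$, $h_k=h(x_k,y_k)$, $\nabla f_k=\nabla f(x_k,y_k)$, $\nabla h_k=\nabla h(x_k,y_k)$, etc. Given $\rho\ge0$, $\alpha,\gamma>0$, $(x_0,y_0)$, the Algorithm iterates for $k\ge0$: $\lambda_k=\big[-\nabla_x h_k^\top\nabla_x f_k-\nabla_y h_k^\top\nabla_y f_k+\alpha\rho(x_k,y_k)\big]_+/(\|\nabla_x h_k\|^2+\|\nabla_y h_k\|^2)$ if $\nabla h_k\ne0$, $\lambda_k=0$ otherwise; $\Delta_k^x=-\nabla_x f_k-\lambda_k\nabla_x h_k$, $\Delta_k^y=-\nabla_y f_k-\lambda_k\nabla_y h_k$; $x_{k+1}=x_k+\gamma\Delta_k^x$, $y_{k+1}=y_k+\gamma\Delta_k^y$. A triple $(x,y,\lambda)$ is an $\epsilon$-KKT point of $\min f$ s.t. $h=0$ if $h(x,y)\le\epsilon$ and $\|\nabla f(x,y)+\lambda\nabla h(x,y)\|^2\le\epsilon$. *)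

(* Defs.v *)
From HB Require Import structures.
From mathcomp Require Import all_boot all_order all_algebra.
From mathcomp Require Import all_classical all_reals all_analysis.
Set Implicit Arguments. Unset Strict Implicit. Unset Printing Implicit Defensive.
Import Order.TTheory GRing.Theory Num.Theory.
Import numFieldNormedType.Exports.
Local Open Scope ring_scope.
Local Open Scope classical_set_scope.

Definition dotv (R : realType) (n : nat) (u v : 'rV[R]_n) : R :=
  \sum_(i < n) u ord0 i * v ord0 i.
Definition sqn (R : realType) (n : nat) (u : 'rV[R]_n) : R := dotv u u.
Definition pnorm2 (R : realType) (n m : nat) (u : 'rV[R]_n) (v : 'rV[R]_m) : R :=
  sqn u + sqn v.
Definition pnorm (R : realType) (n m : nat) (u : 'rV[R]_n) (v : 'rV[R]_m) : R :=
  Num.sqrt (pnorm2 u v).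

Definition has_grad (R : realType) (n m : nat) (F : 'rV[R]_n -> 'rV[R]_m -> R)
  (Gx : 'rV[R]_n -> 'rV[R]_m -> 'rV[R]_n) (Gy : 'rV[R]_n -> 'rV[R]_m -> 'rV[R]_m) : Prop :=
  forall z : 'rV[R]_n * 'rV[R]_m,
    differentiable (fun w : 'rV[R]_n * 'rV[R]_m => F w.1 w.2) z /\
    ('d (fun w : 'rV[R]_n * 'rV[R]_m => F w.1 w.2) z
       = (fun dz : 'rV[R]_n * 'rV[R]_m => dotv (Gx z.1 z.2) dz.1 + dotv (Gy z.1 z.2) dz.2)
       :> ('rV[R]_n * 'rV[R]_m -> R)).

Definition grad_lipschitz (R : realType) (n m : nat) (L : R)
  (Gx : 'rV[R]_n -> 'rV[R]_m -> 'rV[R]_n) (Gy : 'rV[R]_n -> 'rV[R]_m -> 'rV[R]_m) : Prop :=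
  forall x y x' y', pnorm (Gx x y - Gx x' y') (Gy x y - Gy x' y') <= L * pnorm (x - x') (y - y').

Definition grad_bounded (R : realType) (n m : nat) (C : R)
  (Gx : 'rV[R]_n -> 'rV[R]_m -> 'rV[R]_n) (Gy : 'rV[R]_n -> 'rV[R]_m -> 'rV[R]_m) : Prop :=
  forall x y, pnorm (Gx x y) (Gy x y) <= C.

(* The gradient map z |-> (Gx z, Gy z) of a function is itself differentiable
   everywhere with continuous derivative (continuity of z |-> D(grad)(z) v for
   every direction v, which is continuity of the derivative in finite dimension).
   Together with has_grad this says: twice continuously differentiable. *)
Definition grad_C1 (R : realType) (n m : nat)
  (Gx : 'rV[R]_n -> 'rV[R]_m -> 'rV[R]_n) (Gy : 'rV[R]_n -> 'rV[R]_m -> 'rV[R]_m) : Prop :=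
  let G := fun w : 'rV[R]_n * 'rV[R]_m => (Gx w.1 w.2, Gy w.1 w.2) in
  (forall z, differentiable G z) /\
  (forall v : 'rV[R]_n * 'rV[R]_m, continuous (fun z => 'd G z v)).

Definition hfun (R : realType) (n m : nat) (Ggy : 'rV[R]_n -> 'rV[R]_m -> 'rV[R]_m)
  (x : 'rV[R]_n) (y : 'rV[R]_m) : R := sqn (Ggy x y).

Definition rho_of (R : realType) (n m : nat)
  (ghx : 'rV[R]_n -> 'rV[R]_m -> 'rV[R]_n) (ghy : 'rV[R]_n -> 'rV[R]_m -> 'rV[R]_m)
  (h : 'rV[R]_n -> 'rV[R]_m -> R) (x0 : 'rV[R]_n) (y0 : 'rV[R]_m)
  (x : 'rV[R]_n) (y : 'rV[R]_m) : R :=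
  pnorm (ghx x y) (ghy x y) * Num.sqrt (h x0 y0).

Section Algorithm.
Variables (R : realType) (n m : nat).
Variables (gfx : 'rV[R]_n -> 'rV[R]_m -> 'rV[R]_n) (gfy : 'rV[R]_n -> 'rV[R]_m -> 'rV[R]_m).
Variables (ghx : 'rV[R]_n -> 'rV[R]_m -> 'rV[R]_n) (ghy : 'rV[R]_n -> 'rV[R]_m -> 'rV[R]_m).
Variables (rho : 'rV[R]_n -> 'rV[R]_m -> R) (alpha gamma : R).
Variables (x0 : 'rV[R]_n) (y0 : 'rV[R]_m).

Definition alg_lambda (z : 'rV[R]_n * 'rV[R]_m) : R :=
  let x := z.1 in let y := z.2 in
  if (ghx x y == 0) && (ghy x y == 0) then 0
  else Num.max (- dotv (ghx x y) (gfx x y) - dotv (ghy x y) (gfy x y) + alpha * rho x y) 0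
       / (sqn (ghx x y) + sqn (ghy x y)).

Definition alg_dx (z : 'rV[R]_n * 'rV[R]_m) : 'rV[R]_n :=
  - gfx z.1 z.2 - alg_lambda z *: ghx z.1 z.2.
Definition alg_dy (z : 'rV[R]_n * 'rV[R]_m) : 'rV[R]_m :=
  - gfy z.1 z.2 - alg_lambda z *: ghy z.1 z.2.

Fixpoint alg_iter (k : nat) : 'rV[R]_n * 'rV[R]_m :=
  match k with
  | 0 => (x0, y0)
  | k'.+1 => let z := alg_iter k' in (z.1 + gamma *: alg_dx z, z.2 + gamma *: alg_dy z)
  end.
End Algorithm.

Definition eps_KKT (R : realType) (n m : nat) (eps : R)
  (gfx : 'rV[R]_n -> 'rV[R]_m -> 'rV[R]_n) (gfy : 'rV[R]_n -> 'rV[R]_m -> 'rV[R]_m)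
  (h : 'rV[R]_n -> 'rV[R]_m -> R)
  (ghx : 'rV[R]_n -> 'rV[R]_m -> 'rV[R]_n) (ghy : 'rV[R]_n -> 'rV[R]_m -> 'rV[R]_m)
  (x : 'rV[R]_n) (y : 'rV[R]_m) (lam : R) : Prop :=
  h x y <= eps /\ pnorm2 (gfx x y + lam *: ghx x y) (gfy x y + lam *: ghy x y) <= eps.

(* Main.v *)
Require Import Defs.
From HB Require Import structures.
From mathcomp Require Import all_boot all_order all_algebra.
From mathcomp Require Import all_classical all_reals all_analysis.
Import Order.TTheory GRing.Theory Num.Theory.
Import numFieldNormedType.Exports.
From mathcomp Require Import ring lra.
Set Implicit Arguments. Unset Strict Implicit. Unset Printing Implicit Defensive.
Local Open Scope ring_scope.
Local Open Scope classical_set_scope.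




Section Dot.
Variables (R : realType) (n : nat).
Implicit Types u v w : 'rV[R]_n.

Lemma dotvC u v : dotv u v = dotv v u.
Proof. by rewrite /dotv; apply: eq_bigr => i _; rewrite mulrC. Qed.
Lemma dotvDl u v w : dotv (u + v) w = dotv u w + dotv v w.
Proof. by rewrite /dotv -big_split; apply: eq_bigr => i _; rewrite mxE mulrDl. Qed.
Lemma dotvZl (k : R) u w : dotv (k *: u) w = k * dotv u w.
Proof. by rewrite /dotv mulr_sumr; apply: eq_bigr => i _; rewrite mxE mulrA. Qed.
Lemma dotvNl u w : dotv (- u) w = - dotv u w.
Proof. by rewrite -scaleN1r dotvZl mulN1r. Qed.
Lemma dotvBl u v w : dotv (u - v) w = dotv u w - dotv v w.
Proof. by rewrite dotvDl dotvNl. Qed.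
Lemma dotvDr u v w : dotv w (u + v) = dotv w u + dotv w v.
Proof. by rewrite !(dotvC w) dotvDl. Qed.
Lemma dotvZr (k : R) u w : dotv w (k *: u) = k * dotv w u.
Proof. by rewrite !(dotvC w) dotvZl. Qed.
Lemma dotvNr u w : dotv w (- u) = - dotv w u.
Proof. by rewrite !(dotvC w) dotvNl. Qed.
Lemma dotvBr u v w : dotv w (u - v) = dotv w u - dotv w v.
Proof. by rewrite !(dotvC w) dotvBl. Qed.
Lemma sqn_ge0 u : 0 <= sqn u.
Proof. by rewrite /sqn /dotv; apply: sumr_ge0 => i _; rewrite -expr2 sqr_ge0. Qed.
Lemma dotv0l w : dotv 0 w = 0.
Proof. by rewrite -(scale0r 0) dotvZl mul0r. Qed.
Lemma dotv0r w : dotv w 0 = 0.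
Proof. by rewrite dotvC dotv0l. Qed.
End Dot.




Section CS.
Variables (R : realType) (n m : nat).
Implicit Types (a u : 'rV[R]_n) (b v : 'rV[R]_m).

Lemma sqn_lin k (s1 s2 : R) (a u : 'rV[R]_k) :
  sqn (s1 *: a - s2 *: u) = s1 ^+ 2 * sqn a - 2 * s1 * s2 * dotv a u + s2 ^+ 2 * sqn u.
Proof.
rewrite /sqn !(dotvBl, dotvBr, dotvZl, dotvZr) (dotvC u a).
by rewrite !expr2; set X := dotv a u; ring.
Qed.

Lemma pnorm2_ge0 a b : 0 <= pnorm2 a b.
Proof. by rewrite /pnorm2 addr_ge0 // sqn_ge0. Qed.

Lemma pnorm_ge0 a b : 0 <= pnorm a b.
Proof. exact: sqrtr_ge0. Qed.

Lemma pnorm_sqr a b : pnorm a b ^+ 2 = pnorm2 a b.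
Proof. by rewrite /pnorm sqr_sqrtr // pnorm2_ge0. Qed.

Lemma CS a b u v : dotv a u + dotv b v <= pnorm a b * pnorm u v.
Proof.
set P := pnorm2 a b; set Q := pnorm2 u v; set D := dotv a u + dotv b v.
have quad s1 s2 : 0 <= s1 ^+ 2 * P - 2 * s1 * s2 * D + s2 ^+ 2 * Q.
  have := pnorm2_ge0 (s1 *: a - s2 *: u) (s1 *: b - s2 *: v).
  by rewrite /pnorm2 !sqn_lin /P /Q /D /pnorm2; set A := sqn a; set B := sqn b;
     set C := sqn u; set E := sqn v; set X := dotv a u; set Y := dotv b v;
     move=> H; apply: (le_trans H); rewrite le_eqVlt; apply/orP; left; apply/eqP; ring.
have P0 : 0 <= P by exact: pnorm2_ge0.
have Q0 : 0 <= Q by exact: pnorm2_ge0.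
have D2 : D ^+ 2 <= P * Q.
  have [Pp|] := ltrP 0 P.
    have := quad D P; rewrite !expr2 => H.
    have : 0 <= P * (P * Q - D * D) by nra.
    by rewrite pmulr_rge0 // subr_ge0.
  move=> Pn; have PE : P = 0 by apply/eqP; rewrite eq_le Pn P0.
  rewrite PE mul0r.
  have := quad (D * (Q + 1)) (D ^+ 2); rewrite PE.
  have -> : (D * (Q + 1)) ^+ 2 * 0 - 2 * (D * (Q + 1)) * D ^+ 2 * D + (D ^+ 2) ^+ 2 * Q
     = - ((D ^+ 2) ^+ 2 * (Q + 2)) by ring.
  rewrite oppr_ge0 pmulr_lle0; last by lra.
  move=> H4; have : (D ^+ 2) ^+ 2 == 0 by rewrite eq_le H4 sqr_ge0.
  by rewrite sqrf_eq0 => /eqP ->.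
rewrite /pnorm -/P -/Q -sqrtrM //.
apply: (le_trans (ler_norm D)).
by rewrite -sqrtr_sqr ler_wsqrtr.
Qed.

Lemma pnorm2Z (c : R) a b : pnorm2 (c *: a) (c *: b) = c ^+ 2 * pnorm2 a b.
Proof. by rewrite /pnorm2 /sqn !(dotvZl, dotvZr) mulrDr !mulrA -expr2. Qed.

Lemma pnormZ (c : R) a b : 0 <= c -> pnorm (c *: a) (c *: b) = c * pnorm a b.
Proof.
by move=> c0; rewrite /pnorm pnorm2Z sqrtrM ?sqr_ge0 // sqrtr_sqr ger0_norm.
Qed.
End CS.




Section Desc.
Variables (R : realType) (n m : nat).
Variables (F : 'rV[R]_n -> 'rV[R]_m -> R) (Gx : 'rV[R]_n -> 'rV[R]_m -> 'rV[R]_n)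
  (Gy : 'rV[R]_n -> 'rV[R]_m -> 'rV[R]_m).
Hypothesis HG : has_grad F Gx Gy.

Let F' := fun w : 'rV[R]_n * 'rV[R]_m => F w.1 w.2.

Lemma phi_derive (p w : 'rV[R]_n * 'rV[R]_m) (s : R) :
  is_derive s 1 (fun t : R => F' (t *: w + p))
     (dotv (Gx (s *: w + p).1 (s *: w + p).2) w.1 + dotv (Gy (s *: w + p).1 (s *: w + p).2) w.2).
Proof.
have [dF eF] := HG (s *: w + p).
have epath : (fun t : R => t *: w + p) = ( *:%R^~ w) + cst p by [].
have ipath : is_diff s (fun t : R => t *: w + p) (( *:%R^~ w) + 0).
  by rewrite epath; apply: is_diffD.
have dphi : differentiable (F' \o (fun t : R => t *: w + p)) s.
  by apply: differentiable_comp => //.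
have -> : dotv (Gx (s *: w + p).1 (s *: w + p).2) w.1 + dotv (Gy (s *: w + p).1 (s *: w + p).2) w.2
   = 'D_1 (F' \o (fun t : R => t *: w + p)) s.
  rewrite deriveE // diff_comp // diff_val /= addr0 scale1r.
  by rewrite /F' eF.
apply: DeriveDef => //. exact: diff_derivable. Qed.

Let Dg (q w : 'rV[R]_n * 'rV[R]_m) := dotv (Gx q.1 q.2) w.1 + dotv (Gy q.1 q.2) w.2.

Lemma descent (L : R) : grad_lipschitz L Gx Gy ->
  forall (p w : 'rV[R]_n * 'rV[R]_m) (g : R), 0 <= g ->
  F' (g *: w + p) <= F' p + g * Dg p w + L / 2 * g ^+ 2 * pnorm2 w.1 w.2.
Proof.
move=> HL p w g g0.
have [->|gp] := eqVneq g 0.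
  by rewrite scale0r add0r mul0r expr0n /= mulr0 mul0r !addr0.
have gpos : 0 < g by rewrite lt_def gp g0.
set a := Dg p w; set Q := pnorm2 w.1 w.2; set b := L / 2 * Q.
pose psi : R -> R^o := ((fun t : R => F' (t *: w + p) : R^o) - (a \*: (id : R -> R^o)) - (b \*: ((id : R -> R^o) * id)))%R.
have Hd (t : R) : is_derive t 1 psi (Dg (t *: w + p) w - a *: 1 - b *: (t *: 1 + t *: 1)).
  apply: is_deriveB; last first.
  apply: is_deriveB; last first.
  exact: phi_derive.
have cont : {within `[0, g], continuous psi}.
  by apply: derivable_within_continuous => t _; have [] := Hd t.
have [c cin ceq] := MVT gpos (fun t _ => Hd t) cont.
have key : Dg (c *: w + p) w - a <= L * c * Q.
  have c0 : 0 <= c by move: cin; rewrite in_itv /= => /andP [/ltW].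
  have -> : Dg (c *: w + p) w - a = dotv (Gx (c *: w + p).1 (c *: w + p).2 - Gx p.1 p.2) w.1
     + dotv (Gy (c *: w + p).1 (c *: w + p).2 - Gy p.1 p.2) w.2.
    by rewrite /a /Dg !dotvBl; lra.
  apply: (le_trans (CS _ _ _ _)).
  apply: (@le_trans _ _ (L * pnorm ((c *: w + p).1 - p.1) ((c *: w + p).2 - p.2) * pnorm w.1 w.2)).
    by apply: ler_wpM2r; [exact: pnorm_ge0 | exact: HL].
  have -> : (c *: w + p).1 - p.1 = c *: w.1 by rewrite /= addrK.
  have -> : (c *: w + p).2 - p.2 = c *: w.2 by rewrite /= addrK.
  by rewrite pnormZ // -!mulrA -expr2 pnorm_sqr.
have e1 : psi g = F' (g *: w + p) - a * g - b * (g * g) by [].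
have e0 : psi 0 = F' p.
  have -> : psi 0 = F' (0 *: w + p) - a * 0 - b * (0 * 0) by [].
  by rewrite scale0r add0r !mulr0 !subr0.
move: ceq; rewrite e1 e0 subr0.
have -> : a%:A = a by rewrite /GRing.scale /= mulr1.
have -> : b *: (c%:A + c%:A) = b * (c + c) by rewrite /GRing.scale /= mulr1.
move=> E.
have gE : F' (g *: w + p) = F' p + g * a + b * (g * g) + (Dg (c *: w + p) w - a - b * (c + c)) * g.
  by rewrite -E; ring.
rewrite gE /b.
have : (Dg (c *: w + p) w - a - L / 2 * Q * (c + c)) * g <= 0.
  rewrite pmulr_lle0 //; lra.
rewrite expr2; lra.
Qed.
End Desc.

Lemma descent_step (R : realType) (n m : nat) (F : 'rV[R]_n -> 'rV[R]_m -> R)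
  (Gx : 'rV[R]_n -> 'rV[R]_m -> 'rV[R]_n) (Gy : 'rV[R]_n -> 'rV[R]_m -> 'rV[R]_m) (L : R) :
  has_grad F Gx Gy -> grad_lipschitz L Gx Gy ->
  forall x y u v (g : R), 0 <= g ->
  F (x + g *: u) (y + g *: v) <= F x y + g * (dotv (Gx x y) u + dotv (Gy x y) v)
     + L / 2 * g ^+ 2 * pnorm2 u v.
Proof.
move=> HG HL x y u v g g0.
have H := descent HG HL (x, y) (u, v) g0.
rewrite (addrC x) (addrC y); exact: H.
Qed.




Section Alg.
Variables (R : realType).

Lemma sqn_eq0 k (u : 'rV[R]_k) : sqn u = 0 -> u = 0.
Proof.
move=> /eqP; rewrite /sqn /dotv psumr_eq0 => [H|i _]; last by rewrite -expr2 sqr_ge0.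
apply/matrixP => i j; rewrite ord1 mxE.
have := allP H j (mem_index_enum _); rewrite /= mulf_eq0 orbb => /eqP //.
Qed.

Lemma sqnN k (u : 'rV[R]_k) : sqn (- u) = sqn u.
Proof. by rewrite /sqn dotvNl dotvNr opprK. Qed.

Lemma sqn_step k (u v : 'rV[R]_k) (l : R) :
  sqn (- u - l *: v) = sqn u + 2 * l * dotv u v + l ^+ 2 * sqn v.
Proof.
rewrite /sqn !(dotvBl, dotvBr, dotvNl, dotvNr, dotvZl, dotvZr) (dotvC v u).
by rewrite expr2; ring.
Qed.

Lemma dot_step1 k (u v : 'rV[R]_k) (l : R) :
  dotv u (- u - l *: v) = - sqn u - l * dotv u v.
Proof. by rewrite /sqn !(dotvBr, dotvNr, dotvZr). Qed.

Lemma dot_step2 k (u v : 'rV[R]_k) (l : R) :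
  dotv v (- u - l *: v) = - dotv u v - l * sqn v.
Proof. by rewrite /sqn !(dotvBr, dotvNr, dotvZr) (dotvC v u). Qed.

Variables (n m : nat).
Variables (gfx : 'rV[R]_n -> 'rV[R]_m -> 'rV[R]_n) (gfy : 'rV[R]_n -> 'rV[R]_m -> 'rV[R]_m).
Variables (ghx : 'rV[R]_n -> 'rV[R]_m -> 'rV[R]_n) (ghy : 'rV[R]_n -> 'rV[R]_m -> 'rV[R]_m).
Variables (rho : 'rV[R]_n -> 'rV[R]_m -> R) (alpha : R).

Lemma alg_facts (z : 'rV[R]_n * 'rV[R]_m) : 0 <= alpha -> 0 <= rho z.1 z.2 ->
  let l := alg_lambda gfx gfy ghx ghy rho alpha z in
  let dx := alg_dx gfx gfy ghx ghy rho alpha z in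
  let dy := alg_dy gfx gfy ghx ghy rho alpha z in
  [/\ dotv (gfx z.1 z.2) dx + dotv (gfy z.1 z.2) dy = - pnorm2 dx dy + l * alpha * rho z.1 z.2,
      dotv (ghx z.1 z.2) dx + dotv (ghy z.1 z.2) dy <= 0 & 0 <= l].
Proof.
move=> a0 r0 l0 dx dy.
rewrite /dx /dy /alg_dx /alg_dy /l0 /alg_lambda /pnorm2 !sqn_step !dot_step1 !dot_step2.
move: (gfx z.1 z.2) (gfy z.1 z.2) (ghx z.1 z.2) (ghy z.1 z.2) (rho z.1 z.2) r0.
move=> a b c d r r0.
case: ifP => [/andP [/eqP -> /eqP ->]|Hnz].
  by rewrite !dotv0r /sqn !dotv0l; split => //; lra.
rewrite (dotvC c a) (dotvC d b).
set A := - dotv a c - dotv b d + alpha * r.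
have N0 : 0 < sqn c + sqn d.
  rewrite lt_def addr_ge0 ?sqn_ge0 // andbT; apply/negP => /eqP H0.
  have := sqn_ge0 c; have := sqn_ge0 d => g1 g2.
  have Hc : sqn c = 0 by lra.
  have Hd : sqn d = 0 by lra.
  by move: Hnz; rewrite (sqn_eq0 Hc) (sqn_eq0 Hd) !eqxx.
have lN : Num.max A 0 / (sqn c + sqn d) * (sqn c + sqn d) = Num.max A 0.
  by rewrite divfK // gt_eqF.
have lge0 : 0 <= Num.max A 0 / (sqn c + sqn d) by rewrite divr_ge0 ?le_max ?lexx ?orbT // ltW.
set l := Num.max A 0 / (sqn c + sqn d).
have lz : l * (Num.max A 0 - A) = 0.
  have [AP|AN] := leP 0 A.
    by rewrite subrr mulr0.
  by rewrite /l (max_idPr (ltW AN)) !mul0r.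
split => //.
  have E : l * (dotv a c + dotv b d + l * (sqn c + sqn d) - alpha * r) = 0.
    rewrite -[RHS]lz; congr (l * _); rewrite lN /A; ring.
  rewrite !expr2; move: E; set X := dotv a c; set Y := dotv b d; set P := alpha * r.
  move=> E; apply/eqP; rewrite -subr_eq0 -E; apply/eqP; rewrite /P; ring.
have : l * sqn c + l * sqn d = Num.max A 0 by rewrite -mulrDr.
have : A <= Num.max A 0 by rewrite le_max lexx.
have : 0 <= alpha * r by rewrite mulr_ge0.
rewrite /A; lra.
Qed.

Lemma pnormN k l (u : 'rV[R]_k) (v : 'rV[R]_l) : pnorm (- u) (- v) = pnorm u v.
Proof. by rewrite /pnorm /pnorm2 !sqnN. Qed.

Lemma lambda_bound (z : 'rV[R]_n * 'rV[R]_m) (s : R) : 0 <= alpha -> 0 <= s ->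
  rho z.1 z.2 = pnorm (ghx z.1 z.2) (ghy z.1 z.2) * s ->
  alg_lambda gfx gfy ghx ghy rho alpha z * alpha * rho z.1 z.2
    <= (pnorm (gfx z.1 z.2) (gfy z.1 z.2) + alpha * s) * alpha * s.
Proof.
move=> a0 s0 rE; rewrite /alg_lambda rE.
have CSn := CS (- ghx z.1 z.2) (- ghy z.1 z.2) (gfx z.1 z.2) (gfy z.1 z.2).
rewrite pnormN !dotvNl in CSn.
have pa0 := pnorm_ge0 (gfx z.1 z.2) (gfy z.1 z.2).
have pc0 := pnorm_ge0 (ghx z.1 z.2) (ghy z.1 z.2).
have Nr : sqn (ghx z.1 z.2) + sqn (ghy z.1 z.2) = pnorm (ghx z.1 z.2) (ghy z.1 z.2) ^+ 2.
  by rewrite pnorm_sqr.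
move: CSn pa0 pc0 Nr.
move: (gfx z.1 z.2) (gfy z.1 z.2) (ghx z.1 z.2) (ghy z.1 z.2) => a b c d CSn pa0 pc0 Nr.
case: ifP => [_|Hnz].
  by rewrite !mul0r mulr_ge0 // mulr_ge0 // addr_ge0 // mulr_ge0.
rewrite Nr (dotvC c a) (dotvC d b).
rewrite (dotvC c a) (dotvC d b) in CSn.
set r := pnorm c d; set pa := pnorm a b.
rewrite -/r -/pa in CSn pc0 pa0.
have rp : 0 < r.
  rewrite lt_def pc0 andbT; apply/negP => /eqP r0.
  have H0 : sqn c + sqn d = 0 by rewrite Nr -/r r0 expr0n.
  have := sqn_ge0 c; have := sqn_ge0 d => g1 g2.
  have Hc : sqn c = 0 by lra.
  have Hd : sqn d = 0 by lra.
  by move: Hnz; rewrite (sqn_eq0 Hc) (sqn_eq0 Hd) !eqxx.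
set A := - dotv a c - dotv b d + alpha * (r * s).
have AM : Num.max A 0 <= r * (pa + alpha * s).
  rewrite ge_max; apply/andP; split; last by rewrite mulr_ge0 // addr_ge0 // mulr_ge0.
  have : r * (alpha * s) = alpha * (r * s) by ring.
  by rewrite /A mulrDr; lra.
have -> : Num.max A 0 / r ^+ 2 * alpha * (r * s) = (Num.max A 0 / r) * (alpha * s).
  by rewrite expr2; field; rewrite gt_eqF.
rewrite -[X in _ <= X]mulrA; apply: ler_wpM2r; first by rewrite mulr_ge0.
by rewrite ler_pdivrMr // mulrC.
Qed.
End Alg.




Lemma tfacts (R : realType) (K : nat) : (1 <= K)%N ->
  let t : R := K%:R `^ (- (1 / 3)) in
  [/\ 0 < t, t <= 1, (K%:R `^ (- (1 / 6))) ^+ 2 = t,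
      K%:R `^ (- (2 / 3)) = t ^+ 2 & K%:R^-1 = t ^+ 3].
Proof.
move=> K1 t.
have K0 : (0 : R) < K%:R by rewrite ltr0n.
have tp : 0 < t by rewrite powR_gt0.
have e1 : (K%:R `^ (- (1 / 6))) ^+ 2 = t.
  by rewrite -powR_mulrn ?powR_ge0 // -powRrM /t; congr (_ `^ _); lra.
have e2 : K%:R `^ (- (2 / 3)) = t ^+ 2.
  by rewrite -powR_mulrn ?powR_ge0 // -powRrM /t; congr (_ `^ _); lra.
have e3 : (K%:R : R)^-1 = t ^+ 3.
  by rewrite -powR_mulrn ?powR_ge0 // -powRrM /t -powR_inv1 ?ltW //; congr (_ `^ _); lra.
split => //.
have : t ^+ 3 <= 1 by rewrite -e3 invf_le1 // ler1n.
apply: contraTT; rewrite -!ltNge => t1.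
by rewrite exprn_egt1.
Qed.

Section Core.
Variables (R : realType) (Lf Lh Cf C0 fbar Fup : R) (n m : nat).
Variables (f : 'rV[R]_n -> 'rV[R]_m -> R)
    (gfx : 'rV[R]_n -> 'rV[R]_m -> 'rV[R]_n) (gfy : 'rV[R]_n -> 'rV[R]_m -> 'rV[R]_m)
    (ggy : 'rV[R]_n -> 'rV[R]_m -> 'rV[R]_m)
    (ghx : 'rV[R]_n -> 'rV[R]_m -> 'rV[R]_n) (ghy : 'rV[R]_n -> 'rV[R]_m -> 'rV[R]_m).
Hypotheses (Lf0 : 0 < Lf) (Lh0 : 0 < Lh) (C00 : 0 < C0).
Hypotheses (Hf : has_grad f gfx gfy) (HfL : grad_lipschitz Lf gfx gfy)
  (HfB : grad_bounded Cf gfx gfy) (Hfb : forall x y, fbar <= f x y)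
  (Hh : has_grad (hfun ggy) ghx ghy) (HhL : grad_lipschitz Lh ghx ghy).

Definition Bc := `|Fup - fbar + (`|Cf| + Num.sqrt C0) * Num.sqrt C0|.

Lemma core (K : nat) (x0 : 'rV[R]_n) (y0 : 'rV[R]_m) : (1 <= K)%N ->
  let t : R := K%:R `^ (- (1 / 3)) in
  let alpha := K%:R `^ (- (1 / 6)) in
  let gamma := Num.min (K%:R `^ (- (2 / 3))) Lf^-1 in
  hfun ggy x0 y0 <= alpha ^+ 2 * C0 -> f x0 y0 <= Fup ->
  let rho := rho_of ghx ghy (hfun ggy) x0 y0 in
  let z := alg_iter gfx gfy ghx ghy rho alpha gamma x0 y0 in
  (K%:R^-1 * \sum_(k < K) pnorm2 (alg_dx gfx gfy ghx ghy rho alpha (z k))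
                   (alg_dy gfx gfy ghx ghy rho alpha (z k)) <= 2 * Bc * (1 + Lf) * t) /\
  (K%:R^-1 * \sum_(k < K) hfun ggy (z k).1 (z k).2 <= (C0 + Lh * Bc) * t).
Proof.
move=> K1 t alpha gamma h0 f0 rho z.
have [tp t1 ea eg ek] := tfacts R K1; rewrite -/t -/alpha in tp t1 ea eg ek.
have a0 : 0 <= alpha by rewrite powR_ge0.
have a1 : alpha <= 1.
  have : alpha ^+ 2 <= 1 by rewrite ea.
  apply: contraTT; rewrite -!ltNge => ?; by rewrite exprn_egt1.
have gp : 0 < gamma by rewrite lt_min eg exprn_gt0 // invr_gt0.
have gt2 : gamma <= t ^+ 2 by rewrite /gamma -eg ge_min lexx.
have gL : gamma * Lf <= 1.
  by rewrite -ler_pdivlMr // mul1r /gamma ge_min lexx orbT.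
have gt2' : t ^+ 2 <= gamma * (1 + Lf).
  rewrite /gamma; have [H|H] := leP (K%:R `^ (- (2 / 3))) Lf^-1.
    rewrite eg; have : 0 <= t ^+ 2 * Lf by rewrite mulr_ge0 ?exprn_ge0 ?ltW.
    by rewrite mulrDr mulr1; lra.
  rewrite mulrDr mulr1 mulVf ?gt_eqF //.
  have : t ^+ 2 <= 1 by rewrite expr_le1 // ltW.
  have : 0 <= Lf^-1 by rewrite invr_ge0 ltW.
  lra.
have Cf0 : 0 <= Cf by apply: le_trans (HfB 0 0); exact: pnorm_ge0.
set sC := Num.sqrt C0.
have sC0 : 0 <= sC by exact: sqrtr_ge0.
set s := Num.sqrt (hfun ggy x0 y0).
have s0 : 0 <= s by exact: sqrtr_ge0.
have sa : s <= alpha * sC.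
  by rewrite /s /sC -(ger0_norm a0) -sqrtr_sqr -sqrtrM ?sqr_ge0 // ler_wsqrtr.
set A0 := (Cf + sC) * sC.
have lam_b k : alg_lambda gfx gfy ghx ghy rho alpha (z k) * alpha * rho (z k).1 (z k).2 <= A0 * t.
  apply: le_trans (lambda_bound (z := z k) (s := s) gfx gfy a0 s0 _) _; first by [].
  have pa := HfB (z k).1 (z k).2.
  have as0 : 0 <= alpha * s by rewrite mulr_ge0.
  have as1 : alpha * s <= t * sC.
    rewrite -ea expr2 -mulrA ler_wpM2l //.
  have as2 : t * sC <= sC by rewrite ler_piMl.
  rewrite -mulrA /A0 -mulrA [sC * t]mulrC.
  apply: ler_pM => //; first by rewrite addr_ge0 // pnorm_ge0.
  by rewrite lerD //; lra.
pose dxk k := alg_dx gfx gfy ghx ghy rho alpha (z k).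
pose dyk k := alg_dy gfx gfy ghx ghy rho alpha (z k).
pose Dk k := pnorm2 (dxk k) (dyk k).
have zS k : z k.+1 = ((z k).1 + gamma *: dxk k, (z k).2 + gamma *: dyk k) by [].
have Dk0 k : 0 <= Dk k by exact: pnorm2_ge0.
have rho0 k : 0 <= rho (z k).1 (z k).2 by rewrite mulr_ge0 // pnorm_ge0.
have fstep k : f (z k.+1).1 (z k.+1).2 <= f (z k).1 (z k).2 - gamma / 2 * Dk k + gamma * (A0 * t).
  rewrite zS /=; apply: le_trans (descent_step Hf HfL _ _ _ _ (ltW gp)) _.
  have [E1 E2 l0] := alg_facts gfx gfy ghx ghy (z:=z k) a0 (rho0 k).
  rewrite E1 -/(dxk k) -/(dyk k) -/(Dk k).
  have H1 : gamma * Lf * (gamma * Dk k) <= gamma * Dk k.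
    by rewrite ler_piMl // mulr_ge0 // ltW.
  have H2 := lam_b k.
  have H3 : gamma * (alg_lambda gfx gfy ghx ghy rho alpha (z k) * alpha * rho (z k).1 (z k).2)
     <= gamma * (A0 * t) by rewrite ler_wpM2l // ltW.
  move: H1 H3; set X := alg_lambda gfx gfy ghx ghy rho alpha (z k) * alpha * rho (z k).1 (z k).2.
  set D := Dk k; set F0 := f (z k).1 (z k).2 => H1 H3.
  have -> : gamma * (- D + X) = - (gamma * D) + gamma * X by ring.
  have -> : Lf / 2 * gamma ^+ 2 * D = (gamma * Lf * (gamma * D)) / 2 by rewrite expr2; field.
  lra.
have hstep k : hfun ggy (z k.+1).1 (z k.+1).2 <= hfun ggy (z k).1 (z k).2 + Lh / 2 * gamma ^+ 2 * Dk k.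
  rewrite zS /=; apply: le_trans (descent_step Hh HhL _ _ _ _ (ltW gp)) _.
  have [E1 E2 l0] := alg_facts gfx gfy ghx ghy (z:=z k) a0 (rho0 k).
  rewrite -/(dxk k) -/(dyk k) -/(Dk k) in E2 *.
  rewrite lerD2r gerDl; apply: mulr_ge0_le0 => //; exact: ltW.
have tele N : f (z N).1 (z N).2 + gamma / 2 * \sum_(k < N) Dk k
     <= f x0 y0 + N%:R * (gamma * (A0 * t)).
  elim: N => [|N IH]; first by rewrite big_ord0 mulr0 addr0 mul0r addr0.
  rewrite big_ord_recr /= mulrDr -[N.+1]addn1 natrD mulrDl mul1r.
  have := fstep N; lra.
have htele N : hfun ggy (z N).1 (z N).2 <= hfun ggy x0 y0 + Lh / 2 * gamma ^+ 2 * \sum_(k < N) Dk k.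
  elim: N => [|N IH]; first by rewrite big_ord0 mulr0 addr0.
  rewrite big_ord_recr /= mulrDr.
  have := hstep N; lra.
have K0 : (0 : R) < K%:R by rewrite ltr0n.
have Kt : K%:R * t ^+ 3 = 1 by rewrite -ek mulfV // gt_eqF.
have A00 : 0 <= A0 by rewrite mulr_ge0 // addr_ge0.
have BcE : Fup - fbar + A0 <= Bc by rewrite /Bc /A0 (ger0_norm Cf0) ler_norm.
have bnd N : (N <= K)%N -> gamma / 2 * \sum_(k < N) Dk k <= Bc.
  move=> NK; have := tele N; have := Hfb (z N).1 (z N).2.
  have : N%:R * (gamma * (A0 * t)) <= A0.
    have e : A0 = K%:R * (t ^+ 2 * (A0 * t)).
      by rewrite (_ : K%:R * (t ^+ 2 * (A0 * t)) = A0 * (K%:R * t ^+ 3)); [rewrite Kt mulr1 | ring].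
    rewrite [X in _ <= X]e; apply: ler_pM => //.
    - by apply: mulr_ge0; [exact: ltW | apply: mulr_ge0 => //; exact: ltW].
    - by rewrite ler_nat.
    by apply: ler_wpM2r => //; rewrite mulr_ge0 // ltW.
  lra.
split.
  have S0 : 0 <= \sum_(k < K) Dk k by apply: sumr_ge0 => k _.
  have HB := bnd K (leqnn K).
  rewrite ek -/(Dk _).
  have -> : \sum_(k < K) pnorm2 (alg_dx gfx gfy ghx ghy rho alpha (z k))
       (alg_dy gfx gfy ghx ghy rho alpha (z k)) = \sum_(k < K) Dk k by [].
  set S := \sum_(k < K) Dk k in S0 HB *.
  have e3 : t ^+ 3 * S = t ^+ 2 * (t * S) by ring.
  rewrite e3; apply: le_trans (ler_wpM2r _ gt2') _; first by rewrite mulr_ge0 // ltW.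
  have : gamma * S <= 2 * Bc by lra.
  move=> H; have : gamma * S * ((1 + Lf) * t) <= 2 * Bc * ((1 + Lf) * t).
    by apply: ler_wpM2r => //; rewrite mulr_ge0 // ?addr_ge0 // ltW.
  have -> : gamma * (1 + Lf) * (t * S) = gamma * S * ((1 + Lf) * t) by ring.
  by rewrite !mulrA.
set M := (C0 + Lh * Bc) * t.
have hb k : (k < K)%N -> hfun ggy (z k).1 (z k).2 <= M.
  move=> kK; apply: le_trans (htele k) _.
  have HBk := bnd k (ltnW kK).
  have Bc0 : 0 <= Bc by rewrite /Bc normr_ge0.
  have : Lh / 2 * gamma ^+ 2 * \sum_(k0 < k) Dk k0 = Lh * gamma * (gamma / 2 * \sum_(k0 < k) Dk k0).
    by rewrite expr2; ring.
  move=> ->.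
  have : Lh * gamma * (gamma / 2 * \sum_(k0 < k) Dk k0) <= Lh * gamma * Bc.
    by apply: ler_wpM2l => //; rewrite mulr_ge0 // ltW.
  have : Lh * gamma * Bc <= Lh * t * Bc.
    apply: ler_wpM2r => //; apply: ler_wpM2l; first exact: ltW.
    apply: le_trans gt2 _; rewrite expr2 ler_piMl //; exact: ltW.
  move: h0; rewrite ea /M.
  have : 0 <= Lh * t * Bc by rewrite mulr_ge0 // mulr_ge0 // ltW.
  move=> ? ? ? ?; have -> : (C0 + Lh * Bc) * t = t * C0 + Lh * t * Bc by ring.
  lra.
apply: (@le_trans _ _ (K%:R^-1 * (M *+ K))).
  apply: ler_wpM2l; first by rewrite invr_ge0 ltW.
  have -> : M *+ K = \sum_(k < K) M by rewrite sumr_const card_ord.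
  apply: ler_sum => k _; exact: hb (ltn_ord k).
by rewrite -[M *+ K]mulr_natr mulrCA mulVf ?gt_eqF // mulr1.
Qed.
End Core.


Unset Implicit Arguments. Set Strict Implicit. Set Printing Implicit Defensive.

Theorem mainTheorem6 (R : realType) (Lf Lh Cf C0 fbar Fup : R) :
  0 < Lf -> 0 < Lh -> 0 < C0 ->
  exists c c' : R, 0 < c /\ 0 < c' /\
  forall (n m : nat) (f g : 'rV[R]_n -> 'rV[R]_m -> R)
    (gfx : 'rV[R]_n -> 'rV[R]_m -> 'rV[R]_n) (gfy : 'rV[R]_n -> 'rV[R]_m -> 'rV[R]_m)
    (ggx : 'rV[R]_n -> 'rV[R]_m -> 'rV[R]_n) (ggy : 'rV[R]_n -> 'rV[R]_m -> 'rV[R]_m)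
    (ghx : 'rV[R]_n -> 'rV[R]_m -> 'rV[R]_n) (ghy : 'rV[R]_n -> 'rV[R]_m -> 'rV[R]_m),
    (* f : C^1, grad f Lf-Lipschitz, ||grad f|| <= Cf, inf f = fbar > -oo *)
    has_grad f gfx gfy -> grad_lipschitz Lf gfx gfy -> grad_bounded Cf gfx gfy ->
    has_lbound (range (fun z : 'rV[R]_n * 'rV[R]_m => f z.1 z.2)) ->
    fbar = inf (range (fun z : 'rV[R]_n * 'rV[R]_m => f z.1 z.2)) ->
    (* g : C^2 *)
    has_grad g ggx ggy -> grad_C1 ggx ggy ->
    (* h = ||grad_y g||^2 : C^1 with Lh-Lipschitz gradient *)
    has_grad (hfun ggy) ghx ghy -> grad_lipschitz Lh ghx ghy ->
    let h := hfun ggy in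
    (* rates *)
    (forall K : nat, (1 <= K)%N ->
      let alpha := K%:R `^ (- (1 / 6)) in
      let gamma := Num.min (K%:R `^ (- (2 / 3))) Lf^-1 in
      forall (x0 : 'rV[R]_n) (y0 : 'rV[R]_m),
        h x0 y0 <= alpha ^+ 2 * C0 -> f x0 y0 <= Fup ->
        let rho := rho_of ghx ghy h x0 y0 in
        let z := alg_iter gfx gfy ghx ghy rho alpha gamma x0 y0 in
        let lam := fun k => alg_lambda gfx gfy ghx ghy rho alpha (z k) in
        (K%:R^-1 * \sum_(k < K)
            pnorm2 (alg_dx gfx gfy ghx ghy rho alpha (z k))
                   (alg_dy gfx gfy ghx ghy rho alpha (z k))
           <= c * K%:R `^ (- (1 / 3))) /\
        (K%:R^-1 * \sum_(k < K) h (z k).1 (z k).2 <= c * K%:R `^ (- (1 / 3)))) /\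
    (* consequence: eps-KKT point within K = O(eps^-3) iterations *)
    (forall eps : R, 0 < eps ->
      exists K : nat, (1 <= K)%N /\ K%:R <= c' * eps ^- 3 + 1 /\
      let alpha := K%:R `^ (- (1 / 6)) in
      let gamma := Num.min (K%:R `^ (- (2 / 3))) Lf^-1 in
      forall (x0 : 'rV[R]_n) (y0 : 'rV[R]_m),
        h x0 y0 <= alpha ^+ 2 * C0 -> f x0 y0 <= Fup ->
        let rho := rho_of ghx ghy h x0 y0 in
        let z := alg_iter gfx gfy ghx ghy rho alpha gamma x0 y0 in
        let lam := fun k => alg_lambda gfx gfy ghx ghy rho alpha (z k) in
        exists t : nat, (t < K)%N /\
          Num.max (sqn (ggy (z t).1 (z t).2))
                  (pnorm2 (gfx (z t).1 (z t).2 + lam t *: ghx (z t).1 (z t).2)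
                          (gfy (z t).1 (z t).2 + lam t *: ghy (z t).1 (z t).2)) <= eps /\
          eps_KKT eps gfx gfy h ghx ghy (z t).1 (z t).2 (lam t)).
Proof.
move=> Lf0 Lh0 C00.
set B := Bc Cf C0 fbar Fup.
have B0 : 0 <= B by rewrite /B /Bc normr_ge0.
set c := 2 * B * (1 + Lf) + (C0 + Lh * B).
have c0 : 0 < c.
  have : 0 <= 2 * B * (1 + Lf) by rewrite !mulr_ge0 // addr_ge0 // ltW.
  have : 0 <= Lh * B by rewrite mulr_ge0 // ltW.
  rewrite /c; lra.
exists c, ((2 * c) ^+ 3); split => //; split; first by rewrite exprn_gt0 // mulr_gt0.
move=> n m f g gfx gfy ggx ggy ghx ghy Hf HfL HfB Hlb Hinf Hg Hg2 Hh HhL h.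
have Hfb : forall x y, fbar <= f x y.
  by move=> x y; rewrite Hinf; apply: ge_inf => //; exists (x, y).
have partA : forall K : nat, (1 <= K)%N ->
      let alpha := K%:R `^ (- (1 / 6)) in
      let gamma := Num.min (K%:R `^ (- (2 / 3))) Lf^-1 in
      forall (x0 : 'rV[R]_n) (y0 : 'rV[R]_m),
        h x0 y0 <= alpha ^+ 2 * C0 -> f x0 y0 <= Fup ->
        let rho := rho_of ghx ghy h x0 y0 in
        let z := alg_iter gfx gfy ghx ghy rho alpha gamma x0 y0 in
        (K%:R^-1 * \sum_(k < K)
            pnorm2 (alg_dx gfx gfy ghx ghy rho alpha (z k))
                   (alg_dy gfx gfy ghx ghy rho alpha (z k))
           <= 2 * B * (1 + Lf) * K%:R `^ (- (1 / 3))) /\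
        (K%:R^-1 * \sum_(k < K) h (z k).1 (z k).2 <= (C0 + Lh * B) * K%:R `^ (- (1 / 3))).
  move=> K K1 alpha gamma x0 y0 h0 f0 rho z.
  exact: (core Lf0 Lh0 Hf HfL HfB Hfb Hh HhL K1 h0 f0).
split.
  move=> K K1 alpha gamma x0 y0 h0 f0 rho z lam.
  have [tp _ _ _ _] := tfacts R K1.
  have [P1 P2] := partA K K1 x0 y0 h0 f0.
  split.
    apply: le_trans P1 _; apply: ler_wpM2r; first exact: ltW.
    have : 0 <= C0 + Lh * B by rewrite addr_ge0 ?mulr_ge0 // ltW.
    rewrite /c; lra.
  apply: le_trans P2 _; apply: ler_wpM2r; first exact: ltW.
  have : 0 <= 2 * B * (1 + Lf) by rewrite !mulr_ge0 // addr_ge0 // ltW.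
  rewrite /c; lra.
move=> eps e0.
set X := (2 * c) ^+ 3 * eps ^- 3.
have X0 : 0 < X by rewrite mulr_gt0 ?invr_gt0 ?exprn_gt0 // mulr_gt0.
exists (Num.truncn X).+1; split => //; split.
  by rewrite -addn1 natrD lerD // truncn_le ltW.
move=> alpha gamma x0 y0 h0 f0 rho z lam.
set K := (Num.truncn X).+1.
have K1 : (1 <= K)%N by [].
have [tp _ _ _ ek] := tfacts R K1.
have [P1 P2] := partA K K1 x0 y0 h0 f0.
rewrite -/alpha -/gamma -/rho -/z in P1 P2.
set t := K%:R `^ (- (1 / 3)) in tp ek P1 P2.
have K0 : (0 : R) < K%:R by rewrite ltr0n.
have tlt : c * t < eps.
  have XK : X < K%:R by exact: truncnS_gt.
  have t3 : t ^+ 3 < X^-1 by rewrite -ek ltf_pV2 // posrE.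
  have c3 : (c * t) ^+ 3 < eps ^+ 3.
    rewrite exprMn.
    have -> : eps ^+ 3 = c ^+ 3 * X^-1 * 8.
      rewrite /X invfM invrK exprMn mulrA (_ : 2 ^+ 3 = 8 :> R); last first.
        by rewrite !exprS expr0; lra.
      by field; rewrite gt_eqF.
    have c30 : 0 < c ^+ 3 by rewrite exprn_gt0.
    have Xi : 0 < X^-1 by rewrite invr_gt0.
    have : c ^+ 3 * t ^+ 3 < c ^+ 3 * X^-1 by rewrite ltr_pM2l.
    have : 0 < c ^+ 3 * X^-1 by rewrite mulr_gt0.
    lra.
  by move: c3; rewrite ltr_pXn2r // nnegrE ?mulr_ge0 // ltW.
pose a k := pnorm2 (alg_dx gfx gfy ghx ghy rho alpha (z k)) (alg_dy gfx gfy ghx ghy rho alpha (z k))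
   + h (z k).1 (z k).2.
have avg : K%:R^-1 * \sum_(k < K) a k < eps.
  rewrite /a big_split /= mulrDr; apply: le_lt_trans tlt.
  have : 2 * B * (1 + Lf) * t + (C0 + Lh * B) * t = c * t by rewrite /c; ring.
  lra.
have [/existsP [k Hk]|Hn] := boolP [exists k : 'I_K, a k <= eps]; last first.
  exfalso; move/existsPn: Hn => Hn.
  have : K%:R * eps <= \sum_(k < K) a k.
    have -> : K%:R * eps = \sum_(k < K) eps by rewrite sumr_const card_ord mulr_natl.
    apply: ler_sum => k _; have := Hn k; rewrite -ltNge => /ltW //.
  move=> H; move: avg; rewrite ltNge => /negP; apply.
  by rewrite ler_pdivlMl // mulrC.
exists k; split; first exact: ltn_ord.
have Dge := pnorm2_ge0 (alg_dx gfx gfy ghx ghy rho alpha (z k)) (alg_dy gfx gfy ghx ghy rho alpha (z k)).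
have hge : 0 <= h (z k).1 (z k).2 by exact: sqn_ge0.
have E : pnorm2 (gfx (z k).1 (z k).2 + lam k *: ghx (z k).1 (z k).2)
            (gfy (z k).1 (z k).2 + lam k *: ghy (z k).1 (z k).2)
       = pnorm2 (alg_dx gfx gfy ghx ghy rho alpha (z k)) (alg_dy gfx gfy ghx ghy rho alpha (z k)).
  by rewrite /alg_dx /alg_dy -!opprD /pnorm2 !sqnN.
rewrite E; move: Hk; rewrite /a => Hk.
have Hh1 : h (z k).1 (z k).2 <= eps by lra.
have Hd1 : pnorm2 (alg_dx gfx gfy ghx ghy rho alpha (z k)) (alg_dy gfx gfy ghx ghy rho alpha (z k)) <= eps by lra.
split; first by rewrite ge_max; apply/andP; split.
by split => //; rewrite E.
Qed.
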